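(* If $\mathbb P(T(X)>1-\alpha)>0$, then $G(D^\mu,C^\mu)<0$ for all sufficiently large $\mu$.
   Context: Let $(X,Y)\sim P_{XY}$ on $\mathcal X\times\mathcal Y$, $\alpha\in(0,1)$. $\mathcal I$ is a finite collection of subsets of $\mathcal Y$ enumerated in a fixed lexicographic order, $w:\mathcal I\to(0,B)$ a bounded positive weight. For $C\in\mathcal I$ let $p_C(x)=\mathbb P(Y\in C\mid X=x)$, $\ell_{x,C}(\mu)=w(C)p_C(x)+\mu(p_C(x)-(1-\alpha))$ for $\mu\ge0$, $\mathcal U_x(\mu)=\max_{C\in\mathcal I}\ell_{x,C}(\mu)$. $C^\mu(x)$ is a maximizer of $\ell_{x,C}(\mu)$ over $C\in\mathcal I$, ties broken in favor of the largest $w(C)$ and then smallest index; $D^\mu(x)=\mathbb 1\{\mathcal U_x(\mu)\ge0\}$; $T(x)=\max_{C\in\mathcal I}p_C(x)$; $G(D,C)=\mathbb E[(1-p_{C(X)}(X)-\alpha)D(X)]$. *)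

(* Defs.v *)
From HB Require Import structures.
From mathcomp Require Import all_boot all_order all_algebra.
From mathcomp Require Import all_classical all_reals all_analysis.
Set Implicit Arguments. Unset Strict Implicit. Unset Printing Implicit Defensive.
Import Order.TTheory GRing.Theory Num.Theory.
Local Open Scope ring_scope.

(* The finite collection I of subsets of Y is indexed by 'I_n.+1 in its fixed
   (lexicographic) enumeration order; p i x stands for p_{C_i}(x). *)
Section Defs.
Variables (R : realType) (Xs : Type) (n : nat).
Variables (p : 'I_n.+1 -> Xs -> R) (w : 'I_n.+1 -> R) (alpha : R).

Definition ell (mu : R) (x : Xs) (i : 'I_n.+1) : R :=
  w i * p i x + mu * (p i x - (1 - alpha)).

Definition Ux (x : Xs) (mu : R) : R :=
  \big[Num.max/ell mu x ord0]_(i < n.+1) ell mu x i.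

Definition is_maximizer (mu : R) (x : Xs) (i : 'I_n.+1) : bool :=
  [forall j, ell mu x j <= ell mu x i].

Definition Cmu (mu : R) (x : Xs) : 'I_n.+1 :=
  odflt ord0 [pick i | [&& is_maximizer mu x i,
     [forall j, is_maximizer mu x j ==> (w j <= w i)] &
     [forall j, (is_maximizer mu x j && (w j == w i)) ==> (i <= j)%N]]].

Definition Dmu (mu : R) (x : Xs) : bool := 0 <= Ux x mu.

Definition Tmax (x : Xs) : R := \big[Num.max/p ord0 x]_(i < n.+1) p i x.
End Defs.

Definition Gfun (R : realType) (d : measure_display) (Omega : measurableType d)
  (P : probability Omega R) (Xs : Type) (X : Omega -> Xs) (n : nat)
  (p : 'I_n.+1 -> Xs -> R) (alpha : R)
  (D : Xs -> bool) (C : Xs -> 'I_n.+1) : \bar R :=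
  (\int[P]_(om in setT) ((1 - p (C (X om)) (X om) - alpha) * (D (X om))%:R)%:E)%E.

(* Main.v *)
Require Import Defs.
From HB Require Import structures.
From mathcomp Require Import all_boot all_order all_algebra.
From mathcomp Require Import all_classical all_reals all_analysis.
From mathcomp Require Import lra measurable_realfun.
Import Order.TTheory GRing.Theory Num.Theory.
Local Open Scope classical_set_scope.
Local Open Scope ring_scope.

Lemma exists_argmax (R : realType) (T : finType) (P : pred T) (f : T -> R) i0 :
  P i0 -> exists i, P i && [forall j, P j ==> (f j <= f i)].
Proof.
move=> Pi0; case: (arg_maxP f Pi0) => i Pi H; exists i; rewrite Pi /=.
by apply/forallP => j; apply/implyP => Pj; exact: H.
Qed.

Section pointwise.
Variables (R : realType) (Xs : Type) (n : nat).
Variables (p : 'I_n.+1 -> Xs -> R) (w : 'I_n.+1 -> R) (alpha : R).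

Lemma Cmu_spec mu x : is_maximizer p w alpha mu x (Cmu p w alpha mu x).
Proof.
rewrite /Cmu; case: pickP => [i /and3P[]//|H]; exfalso.
have [i1 /andP[_ /forallP h1]] :=
  @exists_argmax R _ predT (ell p w alpha mu x) ord0 isT.
have m1 : is_maximizer p w alpha mu x i1.
  by apply/forallP => j; exact: (implyP (h1 j)).
have [i2 /andP[m2 /forallP h2]] := @exists_argmax R _ _ w _ m1.
have [i3 /andP[/andP[m3 /eqP e3] /forallP h3]] :=
  @exists_argmax R _ (fun j => is_maximizer p w alpha mu x j && (w j == w i2))
    (fun j : 'I_n.+1 => (- (nat_of_ord j)%:R : R)) i2 ltac:(by rewrite /= m2 eqxx).
have := H i3; rewrite m3 /=; move/negP; apply; apply/andP; split.
- apply/forallP => j; apply/implyP => mj; rewrite e3; exact: (implyP (h2 j)).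
- apply/forallP => j; apply/implyP => /andP[mj /eqP ej].
  have := implyP (h3 j); rewrite mj ej e3 eqxx => /(_ isT).
  by rewrite lerN2 ler_nat.
Qed.

Lemma ell_le_Ux mu x i : ell p w alpha mu x i <= Ux p w alpha x mu.
Proof. exact: le_bigmax. Qed.

Lemma Ux_Cmu mu x : Ux p w alpha x mu = ell p w alpha mu x (Cmu p w alpha mu x).
Proof.
apply: le_anti; rewrite ell_le_Ux andbT.
have /forallP h := Cmu_spec mu x.
by apply: bigmax_le => // i _.
Qed.

Lemma Tmax_gt c x : c < Tmax p x -> exists i, c < p i x.
Proof.
move=> h; apply: contrapT => H; move: h; apply/negP; rewrite -leNgt.
apply: bigmax_le; first by rewrite leNgt; apply/negP => h0; apply: H; exists ord0.
by move=> i _; rewrite leNgt; apply/negP => h0; apply: H; exists i.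
Qed.

Variable B : R.
Hypothesis hw : forall i, 0 < w i < B.
Hypothesis p01 : forall i x, 0 <= p i x <= 1.

Definition fx mu x := (1 - p (Cmu p w alpha mu x) x - alpha) * (Dmu p w alpha mu x)%:R.

Lemma fx_ub mu x : 0 < mu -> fx mu x <= B / mu.
Proof.
move=> mu0; have B0 : 0 < B by have /andP[a b] := hw ord0; exact: lt_trans a b.
rewrite /fx; case hD: (Dmu p w alpha mu x); last by rewrite mulr0 divr_ge0 // ltW.
move: hD; rewrite /Dmu Ux_Cmu /ell mulr1 => h; rewrite ler_pdivlMr //.
set c := Cmu p w alpha mu x in h *.
have /andP[w0 wB] := hw c; have /andP[p0 p1] := p01 c x.
nra.
Qed.

Lemma fx_neg mu x delta : 0 < delta -> 0 < mu -> B <= mu * delta / 2 ->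
  1 - alpha + delta < Tmax p x -> fx mu x <= - (delta / 2).
Proof.
move=> d0 mu0 hB /Tmax_gt [i hi].
have hi2 := ell_le_Ux mu x i.
have /forallP hc := Cmu_spec mu x.
have hci := hc i.
set c := Cmu p w alpha mu x in hci *.
have /andP[w0 wB] := hw c; have /andP[p0 p1] := p01 c x.
have /andP[wi0 wiB] := hw i; have /andP[pi0 pi1] := p01 i x.
move: hi2 hci; rewrite /ell => hi2 hci.
have hD : Dmu p w alpha mu x.
  rewrite /Dmu; apply: le_trans hi2; nra.
rewrite /fx hD mulr1 -/c.
have : mu * (p c x - (1 - alpha)) >= mu * (delta / 2) by nra.
rewrite ler_pM2l // => h; lra.
Qed.

End pointwise.

Lemma int_mono (d : measure_display) (T : measurableType d) (R : realType)
  (mu : measure T R) (f g : T -> \bar R) :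
  (forall x, (0 <= f x)%E) -> (forall x, (f x <= g x)%E) ->
  (\int[mu]_x f x <= \int[mu]_x g x)%E.
Proof.
move=> f0 fg; rewrite ge0_integralTE // ge0_integralTE; last first.
  by move=> x; exact: le_trans (f0 x) (fg x).
apply: ereal_sup_le => _ [h hf <-]; exists h => //= x.
exact: le_trans (hf x) (fg x).
Qed.

Theorem proposition6 (R : realType)
  (d : measure_display) (Omega : measurableType d) (P : probability Omega R)
  (dx : measure_display) (Xs : measurableType dx)
  (dy : measure_display) (Ys : measurableType dy)
  (X : Omega -> Xs) (Y : Omega -> Ys)
  (mX : measurable_fun setT X) (mY : measurable_fun setT Y)
  (alpha : R) (halpha : 0 < alpha < 1)
  (n : nat) (Cs : 'I_n.+1 -> set Ys) (Cs_inj : injective Cs)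
  (mCs : forall i, measurable (Cs i))
  (w : 'I_n.+1 -> R) (B : R) (hw : forall i, 0 < w i < B)
  (p : 'I_n.+1 -> Xs -> R)
  (mp : forall i, measurable_fun setT (p i))
  (p01 : forall i x, 0 <= p i x <= 1)
  (hp : forall i (A : set Xs), measurable A ->
     P (X @^-1` A `&` Y @^-1` Cs i) =
     (\int[P]_(om in X @^-1` A) (p i (X om))%:E)%E) :
  (0 < P [set om | (1 - alpha < Tmax p (X om))%R])%E ->
  exists M : R, forall mu : R, M <= mu ->
    (Gfun P X p alpha (Dmu p w alpha mu) (Cmu p w alpha mu) < 0)%E.
Proof.
move=> hpos.
have B0 : 0 < B by have /andP[a b] := hw ord0; exact: lt_trans a b.
pose g om := Tmax p (X om).
have mT : forall s : seq 'I_n.+1,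
    measurable_fun setT (fun x => \big[Num.max/p ord0 x]_(i <- s) p i x).
  elim=> [|i s ih].
    by under eq_fun do rewrite big_nil; exact: mp.
  under eq_fun do rewrite big_cons.
  exact: measurable_maxr.
have mg : measurable_fun setT g := measurableT_comp (mT _) mX.
have mlt c : measurable [set om | c < g om].
  have := mg measurableT _ (measurable_itv `]c, +oo[); rewrite setTI.
  congr measurable; apply/seteqP; split => om /=; rewrite in_itv /= andbT //.
pose S k := [set om | 1 - alpha + k.+1%:R^-1 < g om].
case: (pselect (exists k : nat, (0 < P (S k))%E)) => [[k hk]|hno]; last first.
  exfalso.
  have U : [set om | (1 - alpha < Tmax p (X om))%R] = \bigcup_k S k.
    apply/seteqP; split => om /=.
      by move=> /ltr_add_invr [k hk]; exists k.
    move=> [k _]; rewrite /S /= => h; apply: lt_trans h.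
    by rewrite ltrDl invr_gt0.
  move: hpos; rewrite U.
  have : P (\bigcup_k S k) = 0%E.
    apply/negligibleP; first by apply: bigcupT_measurable => k; exact: mlt.
    apply: negligible_bigcup => k; apply/negligibleP; first exact: mlt.
    apply/eqP; rewrite eq_le measure_ge0 andbT leNgt; apply/negP => h.
    by apply: hno; exists k.
  by move=> ->; rewrite ltxx.
set delta : R := k.+1%:R^-1.
have d0 : 0 < delta by rewrite invr_gt0.
have mS : measurable (S k) := mlt _.
have finS : P (S k) \is a fin_num.
  by rewrite ge0_fin_numE ?measure_ge0 // (le_lt_trans (probability_le1 _ mS)) ?ltry.
set q := fine (P (S k)).
have Pq : P (S k) = q%:E by rewrite fineK.
have q0 : 0 < q by rewrite -lte_fin -Pq.
have h1 : 0 < 4 * B / (delta * q) by rewrite divr_gt0 ?mulr_gt0.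
have h2 : 0 < 4 * B / delta by rewrite divr_gt0 ?mulr_gt0.
exists (4 * B / (delta * q) + 4 * B / delta) => mu hmu.
have mu0 : 0 < mu by lra.
have hBmu : B <= mu * delta / 2.
  have : 4 * B / delta <= mu by lra.
  rewrite ler_pdivrMr // => h; lra.
have hq : B / mu < delta / 2 * q.
  have : 4 * B / (delta * q) <= mu by lra.
  rewrite ler_pdivrMr ?mulr_gt0 // => h; rewrite ltr_pdivrMr //; nra.
rewrite /Gfun integralE.
have up : (\int[P]_(x in setT) ((fun om => ((1 - p (Cmu p w alpha mu (X om)) (X om) - alpha)
      * (Dmu p w alpha mu (X om))%:R)%:E)^\+ x) <= (B / mu)%:E)%E.
  apply: le_trans (@int_mono _ _ _ P _ (cst (B / mu)%:E) _ _) _.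
  - by move=> x; exact: funepos_ge0.
  - move=> x; rewrite funeposE ge_max !lee_fin divr_ge0 ?(ltW B0) ?(ltW mu0) // andbT.
    exact: (@fx_ub _ _ _ p w alpha B hw p01 mu (X x) mu0).
  - rewrite integral_cst //.
    have -> : ((B / mu)%:E * P setT = (B / mu)%:E * 1)%E.
      by congr (_ * _)%E; exact: probability_setT.
    by rewrite mule1.
have low : ((delta / 2 * q)%:E <= \int[P]_(x in setT) ((fun om => ((1 - p (Cmu p w alpha mu (X om)) (X om) - alpha)
      * (Dmu p w alpha mu (X om))%:R)%:E)^\- x))%E.
  have -> : ((delta / 2 * q)%:E = \int[P]_(x in S k) (cst (delta / 2)%:E x))%E.
    by rewrite integral_cst // EFinM; congr (_ * _)%E; symmetry; exact: Pq.
  rewrite integral_mkcond; apply: int_mono.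
  - by move=> x; rewrite /patch; case: ifP => // _; rewrite lee_fin divr_ge0 // ltW.
  - move=> x; rewrite /patch funenegE; case: ifP => [/set_mem hx|_]; last first.
      by rewrite le_max lexx orbT.
    rewrite le_max; apply/orP; left; rewrite -EFinN lee_fin /=.
    have := (@fx_neg _ _ _ p w alpha B hw p01 mu (X x) delta d0 mu0 hBmu hx); rewrite /fx => h; lra.
rewrite sube_lt0; last first.
  apply/orP; left; rewrite ge0_fin_numE; first exact: le_lt_trans up (ltry _).
  by apply: integral_ge0 => x _; exact: funepos_ge0.
apply: le_lt_trans up _; apply: lt_le_trans low; rewrite lte_fin; lra.
Qed.
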